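(* Let $a<b$ be real numbers and $\varphi:(a,b)\to\mathbb R$ a continuous function. Then for almost every $x\in(a,b)$ one of the following holds: (i) $\varphi$ is differentiable at $x$; (ii) there is a sequence $(x_k)_{k\in\mathbb N}$ converging to $x$ such that $0\in\partial^-\varphi(x_k)$ for all $k$, in particular $0\in\partial^-_L\varphi(x)$.
   Context: For $y\in(a,b)$, the viscosity subdifferential $\partial^-\varphi(y)$ is the set of $p\in\mathbb R$ such that there is a $C^1$ function $\psi$ on an open neighborhood $V$ of $y$ with $\psi(y)=\varphi(y)$, $\psi\leq\varphi$ on $V$ and $\psi'(y)=p$. The limiting subdifferential $\partial^-_L\varphi(x)$ is the set of $p$ for which there is a sequence $(x_k,p_k)\to(x,p)$ with $p_k\in\partial^-\varphi(x_k)$. *)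

(* Defs.v *)
From HB Require Import structures.
From mathcomp Require Import all_boot all_order all_algebra.
From mathcomp Require Import all_classical all_reals all_analysis.
Set Implicit Arguments. Unset Strict Implicit. Unset Printing Implicit Defensive.
Import Order.TTheory GRing.Theory Num.Theory.
Import numFieldNormedType.Exports.
Local Open Scope classical_set_scope.
Local Open Scope ring_scope.

Definition C1_on {R : realType} (V : set R) (psi : R -> R) : Prop :=
  (forall z, V z -> derivable psi z 1) /\
  (forall z, V z -> {for z, continuous (derive1 psi)}).

Definition visc_subdiff {R : realType} (a b : R) (phi : R -> R) (y : R) : set R :=
  [set p | `]a, b[%classic y /\
     exists (V : set R) (psi : R -> R),
       [/\ open V, V y, V `<=` `]a, b[%classic & C1_on V psi] /\
       [/\ psi y = phi y,
           (forall z, V z -> psi z <= phi z) &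
           derive1 psi y = p]].

Definition lim_subdiff {R : realType} (a b : R) (phi : R -> R) (x : R) : set R :=
  [set p | exists (xs ps : nat -> R),
     [/\ xs @ \oo --> x, ps @ \oo --> p &
         forall k, visc_subdiff a b phi (xs k) (ps k)]].

(* Main.v *)
Require Import Defs.
From HB Require Import structures.
From mathcomp Require Import all_boot all_order all_algebra.
From mathcomp Require Import all_classical all_reals all_analysis.
Set Implicit Arguments. Unset Strict Implicit. Unset Printing Implicit Defensive.
Import Order.TTheory GRing.Theory Num.Theory.
Import numFieldNormedType.Exports.
Local Open Scope classical_set_scope.
Local Open Scope ring_scope.
From mathcomp Require Import lra.

Section RS.
Context {R : realType}.
Implicit Types (g : R -> R).

Lemma near_pt_right g (c d v : R) : {for c, continuous g} -> c < d -> v < g c ->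
  exists t, c < t < d /\ v < g t.
Proof.
move=> cg cd vg.
have : nbhs c (g @^-1` [set y | v < y]).
  by apply: cg; apply: open_nbhs_nbhs; split => //; exact: open_gt.
move=> /nbhs_ballP[e /= e0 H].
pose t := c + Num.min e (d - c) / 2.
have m0 : 0 < Num.min e (d - c) by rewrite lt_min e0 subr_gt0.
have hm : Num.min e (d - c) / 2 < Num.min e (d - c).
  by rewrite ltr_pdivrMr // ltr_pMr // ltr1n.
exists t; split; last first.
  apply: H; rewrite /ball /= /t opprD addNKr normrN ger0_norm; last by rewrite divr_ge0 // ltW.
  by apply: lt_le_trans hm _; rewrite ge_min lexx.
apply/andP; split; first by rewrite /t ltrDl divr_gt0.
rewrite /t -ltrBrDl; apply: lt_le_trans hm _; by rewrite ge_min lexx orbT.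
Qed.

Lemma near_pt_left g (c d v : R) : {for d, continuous g} -> c < d -> v < g d ->
  exists t, c < t < d /\ v < g t.
Proof.
move=> cg cd vg.
have : nbhs d (g @^-1` [set y | v < y]).
  by apply: cg; apply: open_nbhs_nbhs; split => //; exact: open_gt.
move=> /nbhs_ballP[e /= e0 H].
pose t := d - Num.min e (d - c) / 2.
have m0 : 0 < Num.min e (d - c) by rewrite lt_min e0 subr_gt0.
have hm : Num.min e (d - c) / 2 < Num.min e (d - c).
  by rewrite ltr_pdivrMr // ltr_pMr // ltr1n.
exists t; split; last first.
  apply: H; rewrite /ball /= /t opprB addrC subrK ger0_norm; last by rewrite divr_ge0 // ltW.
  by apply: lt_le_trans hm _; rewrite ge_min lexx.
apply/andP; split; last by rewrite /t ltrBlDr ltrDl divr_gt0.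
rewrite /t ltrBrDl -ltrBrDr; apply: lt_le_trans hm _; by rewrite ge_min lexx orbT.
Qed.

Definition rsR g (al be : R) : set R :=
  [set x | al < x < be /\ exists y, x < y <= be /\ g x < g y].
Definition rsL g (al be : R) : set R :=
  [set x | al < x < be /\ exists y, al <= y < x /\ g x < g y].

Lemma open_rsR g al be : continuous g -> open (rsR g al be).
Proof.
move=> cg.
have -> : rsR g al be = `]al, be[ `&`
    \bigcup_(y in [set y | y <= be]) ([set x | x < y] `&` g @^-1` [set z | z < g y]).
  apply/seteqP; split => x /=.
  - move=> [xab [y [/andP[xy yb] gxy]]]; split; first by rewrite in_itv.
    by exists y.
  - rewrite in_itv /= => -[xab [y /= yb [/= xy gxy]]].
    by split => //; exists y; rewrite xy yb.
apply: openI; first exact: itv_open.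
apply: bigcup_open => y _; apply: openI; first exact: open_lt.
apply: open_comp; [move=> ? _; exact: cg | exact: open_lt].
Qed.

Lemma open_rsL g al be : continuous g -> open (rsL g al be).
Proof.
move=> cg.
have -> : rsL g al be = `]al, be[ `&`
    \bigcup_(y in [set y | al <= y]) ([set x | y < x] `&` g @^-1` [set z | z < g y]).
  apply/seteqP; split => x /=.
  - move=> [xab [y [/andP[ay yx] gxy]]]; split; first by rewrite in_itv.
    by exists y.
  - rewrite in_itv /= => -[xab [y /= ay [/= yx gxy]]].
    by split => //; exists y; rewrite yx ay.
apply: openI; first exact: itv_open.
apply: bigcup_open => y _; apply: openI; first exact: open_gt.
apply: open_comp; [move=> ? _; exact: cg | exact: open_lt].
Qed.

Lemma rsR_comp g al be c d : continuous g -> c < d ->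
  (forall x, c < x < d -> rsR g al be x) -> ~ rsR g al be c -> ~ rsR g al be d ->
  g c <= g d.
Proof.
move=> cg cd sub nc nd.
have key : forall x, c < x < d -> g x <= g d.
  move=> x xcd; rewrite leNgt; apply/negP => gdx.
  have [[/andP[ax xb] _]] := sub x xcd.
  have [z zI zmax] := @EVT_max _ g x be (ltW xb) (continuous_subspaceT cg).
  move: zI; rewrite in_itv /= => /andP[xz zb].
  have gxz : g x <= g z by apply: zmax; rewrite in_itv /= lexx ltW.
  have [zd|dz] := ltP z d.
  - have czd : c < z < d by rewrite zd andbT (lt_le_trans _ xz) //; case/andP: xcd.
    have [_ [y [/andP[zy yb] gzy]]] := sub z czd.
    have := zmax y; rewrite in_itv /= yb (le_trans xz (ltW zy)) => /(_ isT).
    by rewrite leNgt gzy.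
  - have gdz : g d < g z by apply: lt_le_trans gdx gxz.
    have dz' : d < z by rewrite lt_neqAle dz andbT; apply/eqP => dzE; move: gdz; rewrite dzE ltxx.
    apply: nd; split; last by exists z; rewrite dz' zb gdz.
    case/andP: xcd => cx xd.
    by rewrite (lt_trans ax xd) (lt_le_trans dz' zb).
rewrite leNgt; apply/negP => gdc.
have [t [tcd gt]] := near_pt_right (cg c) cd gdc.
by move: (key t tcd); rewrite leNgt gt.
Qed.
Lemma rsL_comp g al be c d : continuous g -> c < d ->
  (forall x, c < x < d -> rsL g al be x) -> ~ rsL g al be c -> ~ rsL g al be d ->
  g d <= g c.
Proof.
move=> cg cd sub nc nd.
have key : forall x, c < x < d -> g x <= g c.
  move=> x xcd; rewrite leNgt; apply/negP => gcx.
  have [[/andP[ax xb] _]] := sub x xcd.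
  have [z zI zmax] := @EVT_max _ g al x (ltW ax) (continuous_subspaceT cg).
  move: zI; rewrite in_itv /= => /andP[az zx].
  have gxz : g x <= g z by apply: zmax; rewrite in_itv /= lexx ltW.
  have [cz|zc] := ltP c z.
  - have czd : c < z < d by rewrite cz /= (le_lt_trans zx) //; case/andP: xcd.
    have [_ [y [/andP[ay yz] gzy]]] := sub z czd.
    have := zmax y; rewrite in_itv /= ay (le_trans (ltW yz) zx) => /(_ isT).
    by rewrite leNgt gzy.
  - have gcz : g c < g z by apply: lt_le_trans gcx gxz.
    have zc' : z < c by rewrite lt_neqAle zc andbT; apply/eqP => zcE; move: gcz; rewrite zcE ltxx.
    apply: nc; split; last by exists z; rewrite zc' az gcz.
    case/andP: xcd => cx xd.
    by rewrite (le_lt_trans az zc') (lt_trans cx xb).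
rewrite leNgt; apply/negP => gcd.
have [t [tcd gt]] := near_pt_left (cg d) cd gcd.
by move: (key t tcd); rewrite leNgt gt.
Qed.

End RS.

Section Comp.
Context {R : realType}.

Lemma pt_right (c d e : R) : c < d -> 0 < e -> exists t, c < t < d /\ `|c - t| < e.
Proof.
move=> cd e0.
have m0 : 0 < Num.min e (d - c) by rewrite lt_min e0 subr_gt0.
have hm : Num.min e (d - c) / 2 < Num.min e (d - c).
  by rewrite ltr_pdivrMr // ltr_pMr // ltr1n.
exists (c + Num.min e (d - c) / 2); split; last first.
  rewrite opprD addNKr normrN ger0_norm; last by rewrite divr_ge0 // ltW.
  by apply: lt_le_trans hm _; rewrite ge_min lexx.
apply/andP; split; first by rewrite ltrDl divr_gt0.
rewrite -ltrBrDl; apply: lt_le_trans hm _; by rewrite ge_min lexx orbT.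
Qed.

Lemma pt_left (c d e : R) : c < d -> 0 < e -> exists t, c < t < d /\ `|d - t| < e.
Proof.
move=> cd e0.
have m0 : 0 < Num.min e (d - c) by rewrite lt_min e0 subr_gt0.
have hm : Num.min e (d - c) / 2 < Num.min e (d - c).
  by rewrite ltr_pdivrMr // ltr_pMr // ltr1n.
exists (d - Num.min e (d - c) / 2); split; last first.
  rewrite opprB addrC subrK ger0_norm; last by rewrite divr_ge0 // ltW.
  by apply: lt_le_trans hm _; rewrite ge_min lexx.
apply/andP; split; last by rewrite ltrBlDr ltrDl divr_gt0.
rewrite ltrBrDl -ltrBrDr; apply: lt_le_trans hm _; by rewrite ge_min lexx orbT.
Qed.

Definition maxitv (O : set R) (c d : R) :=
  [/\ c < d, (forall x, c < x < d -> O x), ~ O c & ~ O d].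

Lemma comp_endpoint (O : set R) (oO : open O) k c d :
  open_disjoint_itv oO k = `]c, d[%classic -> c < d -> ~ O c /\ ~ O d.
Proof.
move=> Ik cd.
have tI := @open_disjoint_itv_trivIset R O oO.
have oI := @open_disjoint_itv_open R O oO.
split => Oe.
- have := Oe; rewrite (open_disjoint_itv_bigcup oO) => -[j _ Ijc].
  have /nbhs_ballP[e /= e0 H] : nbhs c (open_disjoint_itv oO j).
    by apply: open_nbhs_nbhs; split => //; exact: oI.
  have [t [tcd ct]] := pt_right cd e0.
  have jk : j = k.
    apply: tI => //; exists t; split; first exact: H.
    by rewrite Ik /= in_itv.
  by move: Ijc; rewrite jk Ik /= in_itv /= ltxx.
- have := Oe; rewrite (open_disjoint_itv_bigcup oO) => -[j _ Ijc].
  have /nbhs_ballP[e /= e0 H] : nbhs d (open_disjoint_itv oO j).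
    by apply: open_nbhs_nbhs; split => //; exact: oI.
  have [t [tcd ct]] := pt_left cd e0.
  have jk : j = k.
    apply: tI => //; exists t; split; first exact: H.
    by rewrite Ik /= in_itv.
  by move: Ijc; rewrite jk Ik /= in_itv /= ltxx andbF.
Qed.

Lemma comp_shape (O : set R) (oO : open O) (al be : R) : al <= be ->
  O `<=` `]al, be[ -> forall k, exists c d,
  [/\ open_disjoint_itv oO k = `]c, d[%classic, (c < d -> maxitv O c d),
      al <= c & d <= be].
Proof.
move=> alb Oab k.
set I := open_disjoint_itv oO k.
have IO : I `<=` O by move=> y Iy; rewrite (open_disjoint_itv_bigcup oO); exists k.
have [[x Ix]|nI] := pselect (exists x, I x); last first.
  exists al, al; split => //; last by rewrite ltxx.
  apply/seteqP; split => y /= Iy.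
    by exfalso; apply: nI; exists y.
  by move: Iy; rewrite in_itv /= => /andP[/lt_trans h/h]; rewrite ltxx.
have oI : open I := @open_disjoint_itv_open R O oO k.
have iI : is_interval I := @open_disjoint_itv_is_interval R O oO k.
have lb : lbound I al by move=> y /IO /Oab; rewrite /= in_itv /= => /andP[/ltW].
have ub : ubound I be by move=> y /IO /Oab; rewrite /= in_itv /= => /andP[_ /ltW].
have hi : has_inf I by split; [exists x | exists al].
have hs : has_sup I by split; [exists x | exists be].
have Iitv : I = `]inf I, sup I[%classic.
  apply/seteqP; split => y.
  - move=> Iy; have /nbhs_ballP[e /= e0 H] : nbhs y I.
      by apply: open_nbhs_nbhs; split.
    rewrite /= in_itv /=; apply/andP; split.
    + have : I (y - e / 2).
        apply: H; rewrite /ball /= opprB addrC subrK ger0_norm ?divr_ge0 ?ltW //.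
        by rewrite ltr_pdivrMr // ltr_pMr // ltr1n.
      move/(ge_inf (proj2 hi)) => /le_lt_trans; apply.
      by rewrite ltrBlDr ltrDl divr_gt0.
    + have : I (y + e / 2).
        apply: H; rewrite /ball /= opprD addNKr normrN ger0_norm ?divr_ge0 ?ltW //.
        by rewrite ltr_pdivrMr // ltr_pMr // ltr1n.
      move/(ub_le_sup (proj2 hs)); apply: lt_le_trans.
      by rewrite ltrDl divr_gt0.
  - rewrite /= in_itv /= => /andP[iy ys].
    have h1 : 0 < y - inf I by rewrite subr_gt0.
    have h2 : 0 < sup I - y by rewrite subr_gt0.
    have [e1 Ie1 e1y] := inf_adherent h1 hi.
    have [e2 Ie2 e2y] := sup_adherent h2 hs.
    apply: (iI e1 e2) => //; apply/andP; split.
      by move: e1y; rewrite addrC subrK => /ltW.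
    by move: e2y; rewrite opprB addrC subrK => /ltW.
exists (inf I), (sup I); split => //.
- move=> cd; have [nc nd] := comp_endpoint Iitv cd.
  split => // y yI; apply: IO; by rewrite Iitv /= in_itv.
- by apply: lb_le_inf => //; exists x.
- by apply: ge_sup => //; exists x.
Qed.

End Comp.

Section Meas.
Context {R : realType}.
Local Notation mu := (@lebesgue_measure R).

Lemma measure_bigcupT (F : nat -> set R) : (forall k, measurable (F k)) ->
  trivIset setT F -> mu (\bigcup_k F k) = (\sum_(0 <= k <oo) mu (F k))%E.
Proof.
move=> mF tF.
transitivity (\sum_(0 <= i <oo | i \in setT) mu (F i))%E.
  by rewrite measure_bigcup // => i _; exact: mF.
by apply: eq_eseriesl => k; rewrite in_setT.

Qed.

Lemma mu_itvoo (c d : R) : c < d -> mu `]c, d[%classic = (d - c)%:E.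
Proof. by move=> cd; rewrite lebesgue_measure_itv /= lte_fin cd -EFinD. Qed.

Lemma mu_itvoo_le (c d : R) : c <= d -> (mu `]c, d[%classic <= (d - c)%:E)%E.
Proof.
rewrite le_eqVlt => /predU1P[->|cd]; last by rewrite mu_itvoo.
by rewrite set_itv_ge ?measure0 ?subrr //= bnd_simp ltxx.
Qed.

Lemma disj_itvoo (c d c' d' : R) : c < d -> c' < d' ->
  `]c, d[%classic `&` `]c', d'[%classic = set0 -> d <= c' \/ d' <= c.
Proof.
move=> cd cd' dis.
have [dc'|c'd] := leP d c'; first by left.
have [d'c|dc] := leP d' c; first by right.
exfalso.
have lt1 : Num.max c c' < Num.min d d'.
  by rewrite gt_max !lt_min cd c'd dc cd'.
have [t [/andP[t1 t2] _]] := pt_right lt1 ltr01.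
have : (`]c, d[ `&` `]c', d'[) t.
  move: t1 t2; rewrite gt_max lt_min => /andP[ct c't] /andP[td td'].
  by split; rewrite /= in_itv /= ?ct ?td ?c't ?td'.
by rewrite dis.
Qed.

Lemma rs_bound (f : R -> R) (O : set R) (oO : open O) (a b q : R) :
  {homo f : x y / x <= y} -> a <= b -> 0 < q -> O `<=` `]a, b[ ->
  (forall c d, maxitv O c d -> q * (d - c) <= f d - f c) ->
  (q%:E * mu O <= (f b - f a)%:E)%E.
Proof.
move=> ndf ab q0 Oab Hq.
set I := open_disjoint_itv oO.
have /choice[cd Hcd] : forall k, exists p : R * R,
    [/\ I k = `]p.1, p.2[%classic, (p.1 < p.2 -> maxitv O p.1 p.2), a <= p.1 & p.2 <= b].
  by move=> k; have [c [d H]] := comp_shape oO ab Oab k; exists (c, d).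
have mI : forall k, measurable (I k).
  by move=> k; apply: measurable_realfun.open_measurable; exact: open_disjoint_itv_open.
pose Y k := `]f (cd k).1, f (cd k).2[%classic.
have mY : forall k, measurable (Y k) by move=> k; exact: measurable_itv.
have tY : trivIset setT Y.
  move=> j k _ _ [y []]; rewrite /Y /= !in_itv /= => /andP[y1 y2] /andP[y3 y4].
  have [Ij _ _ _] := Hcd j; have [Ik _ _ _] := Hcd k.
  have lt1 : (cd j).1 < (cd j).2.
    rewrite ltNge; apply/negP => /ndf h.
    by move: (lt_trans y1 y2); rewrite ltNge h.
  have lt2 : (cd k).1 < (cd k).2.
    rewrite ltNge; apply/negP => /ndf h.
    by move: (lt_trans y3 y4); rewrite ltNge h.
  apply: contrapT => jk.
  have : I j `&` I k = set0.
    apply/seteqP; split => // z [Ijz Ikz].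
    by apply: jk; apply: (@open_disjoint_itv_trivIset R O oO) => //; exists z.
  rewrite Ij Ik => /(disj_itvoo lt1 lt2) [] /ndf h.
  + by move: (lt_trans y2 (le_lt_trans h y3)); rewrite ltxx.
  + by move: (lt_trans y4 (le_lt_trans h y1)); rewrite ltxx.
rewrite {1}(open_disjoint_itv_bigcup oO) -/I measure_bigcupT //; last first.
  exact: open_disjoint_itv_trivIset.
rewrite -nneseriesZl; last by move=> k _; exact: measure_ge0.
apply: (@le_trans _ _ (\sum_(0 <= k <oo) mu (Y k))%E).
  apply: lee_nneseries.
    move=> k _ _; rewrite mule_ge0 // lee_fin ltW //.
  move=> k _; have [Ik mx ac db] := Hcd k.
  rewrite Ik; have [lt1|ge1] := ltP (cd k).1 (cd k).2.
  - rewrite mu_itvoo // -EFinM /Y.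
    have [lt2|ge2] := ltP (f (cd k).1) (f (cd k).2).
      by rewrite mu_itvoo // lee_fin; case: (mx lt1) => *; apply: Hq; exact: mx.
    apply: (@le_trans _ _ 0%:E); last exact: measure_ge0.
    rewrite lee_fin (le_trans (Hq _ _ (mx lt1))) // subr_le0 //.
  - by rewrite set_itv_ge ?measure0 ?mule0 ?measure_ge0 //= bnd_simp -leNgt.
rewrite -measure_bigcupT //.
apply: (@le_trans _ _ (mu `]f a, f b[%classic)); last exact/mu_itvoo_le/ndf.
apply: le_measure.
- by rewrite inE; apply: bigcupT_measurable.
- by rewrite inE; exact: measurable_itv.
move=> y [k _]; rewrite /Y /= !in_itv /= => /andP[y1 y2].
have [Ik mx ac db] := Hcd k.
by rewrite (le_lt_trans (ndf _ _ ac) y1) (lt_le_trans y2 (ndf _ _ db)).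
Qed.

End Meas.

Section Null.
Context {R : realType}.
Local Notation mu := (@lebesgue_measure R).

Lemma geo_le0 (x : \bar R) (r C : R) : 0 <= r < 1 ->
  (forall k, (x <= (r ^+ k * C)%:E)%E) -> (x <= 0)%E.
Proof.
move=> /andP[r0 r1] H.
have := H 0%N; rewrite expr0 mul1r.
case: x H => [m H hC| H hC| H hC]; [|by []|by rewrite leNye].
rewrite lee_fin leNgt; apply/negP => m0.
have cv : (fun k => r ^+ k * C) @ \oo --> (0 : R).
  rewrite -(mul0r C); apply: cvgMl; apply: cvg_expr.
  by rewrite ger0_norm.
have := cvgr_lt (0 : R) cv m m0 => -[N _ HN].
have := HN N (leqnn N) => /=.
by move: (H N); rewrite lee_fin => /le_lt_trans h /h; rewrite ltxx.
Qed.

Lemma iter_null (E : set R) (p q : R) : 0 < p -> p < q ->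
  (forall a b O, a <= b -> open O -> O `<=` `]a, b[%classic -> exists O',
     [/\ open O', O' `<=` O, E `&` O `<=` O' & (q%:E * mu O' <= p%:E * mu O)%E]) ->
  mu.-negligible E.
Proof.
move=> p0 pq step.
have q0 : 0 < q by apply: lt_trans pq.
set r := p / q.
have r0 : 0 <= r by rewrite divr_ge0 // ltW.
have r1 : r < 1 by rewrite ltr_pdivrMr // mul1r.
apply: (@negligibleS _ _ _ mu (\bigcup_n (E `&` `](- n%:R), n%:R[%classic))).
  move=> x Ex; exists (Num.Def.archi_bound `|x|) => //; split => //.
  by rewrite /= in_itv /= -ltr_norml; exact: archi_boundP.
apply: negligible_bigcup => n.
set O0 : set R := `](- n%:R), n%:R[%classic.
have n0 : - n%:R <= (n%:R : R) by rewrite (@le_trans _ _ 0) // ?oppr_le0 ?ler0n.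
set C : R := n%:R - - n%:R.
have /choice[F HF] : forall O : set R, exists O' : set R,
    open O -> O `<=` O0 ->
    [/\ open O', O' `<=` O, E `&` O `<=` O' & (q%:E * mu O' <= p%:E * mu O)%E].
  move=> O; have [oO|noO] := pselect (open O); last by exists set0.
  have [sO|nsO] := pselect (O `<=` O0); last by exists set0.
  have [U HU] := step (- n%:R) n%:R O n0 oO sO; by exists U.
pose Ok k := iter k F O0.
have HOk : forall k, [/\ open (Ok k), Ok k `<=` O0, E `&` O0 `<=` Ok k &
    (mu (Ok k) <= (r ^+ k * C)%:E)%E].
  elim=> [|k [ok sk ek mk]].
    split => //.
    rewrite /Ok /= (_ : r ^+ 0 = 1) ?mul1r //; exact: mu_itvoo_le.
  have [oF sF eF mF] := HF (Ok k) ok sk.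
  have -> : Ok k.+1 = F (Ok k) by [].
  split => //; first exact: subset_trans sk.
    by move=> x [Ex Ox]; apply: eF; split => //; apply: ek.
  set m' := mu (F (Ok k)).
  have : (m' <= (q^-1)%:E * (q%:E * m'))%E.
    by rewrite muleA -EFinM mulVf ?gt_eqF // mul1e.
  move/le_trans; apply.
  rewrite (_ : (r ^+ k.+1 * C)%:E = (q^-1)%:E * (p%:E * (r ^+ k * C)%:E))%E; last first.
    by rewrite -!EFinM exprS /r; congr (_%:E); rewrite !mulrA [q^-1 * p]mulrC.
  apply: lee_wpmul2l; first by rewrite lee_fin invr_ge0 ltW.
  apply: le_trans mF _; apply: lee_wpmul2l; first by rewrite lee_fin ltW.
  exact: mk.
have mOk : forall k, measurable (Ok k).
  by move=> k; apply: measurable_realfun.open_measurable; case: (HOk k).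
exists (\bigcap_k Ok k); split.
- exact: bigcapT_measurable.
- apply/eqP; rewrite eq_le measure_ge0 andbT.
  apply: (@geo_le0 _ r C); first by rewrite r0 r1.
  move=> k; case: (HOk k) => _ _ _ mk; apply: le_trans mk.
  apply: le_measure; rewrite ?inE.
  + exact: bigcapT_measurable.
  + exact: mOk.
  + by move=> x /(_ k I).
- by move=> x Ex k _; case: (HOk k) => _ _ ek _; apply: ek.
Qed.

End Null.

Section Step.
Context {R : realType}.
Local Notation mu := (@lebesgue_measure R).

Lemma cont_lin1 (f : R -> R) (p : R) : continuous f -> continuous (fun t => f t - p * t).
Proof.
move=> cf x.
have hp : {for x, continuous (fun t : R => p * t)}.
  apply: continuousM; [exact: cst_continuous | exact: cvg_id].
exact: (continuousB (cf x) hp).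
Qed.

Lemma cont_lin2 (f : R -> R) (p : R) : continuous f -> continuous (fun t => p * t - f t).
Proof.
move=> cf x.
have hp : {for x, continuous (fun t : R => p * t)}.
  apply: continuousM; [exact: cst_continuous | exact: cvg_id].
exact: (continuousB hp (cf x)).
Qed.

Lemma refine (E O : set R) (oO : open O) (a b k1 k2 : R) :
  a <= b -> 0 < k1 -> 0 <= k2 -> O `<=` `]a, b[ ->
  (forall c d, maxitv O c d -> exists T, [/\ open T, T `<=` `]c, d[%classic,
      E `&` `]c, d[ `<=` T & (k1%:E * mu T <= (k2 * (d - c))%:E)%E]) ->
  exists U, [/\ open U, U `<=` O, E `&` O `<=` U & (k1%:E * mu U <= k2%:E * mu O)%E].
Proof.
move=> ab k10 k20 Oab Hc.
set I := open_disjoint_itv oO.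
have IO : forall k, I k `<=` O.
  by move=> k y Iy; rewrite (open_disjoint_itv_bigcup oO); exists k.
have /choice[T HT] : forall k, exists T : set R,
    [/\ open T, T `<=` I k, E `&` I k `<=` T & (k1%:E * mu T <= k2%:E * mu (I k))%E].
  move=> k; have [c [d [Ik mx _ _]]] := comp_shape oO ab Oab k.
  rewrite -/I in Ik.
  have [cd|dc] := ltP c d.
    have [T [oT sT eT mT]] := Hc c d (mx cd).
    by exists T; rewrite Ik mu_itvoo // EFinM; split.
  have I0 : I k = set0 by rewrite Ik set_itv_ge //= bnd_simp -leNgt.
  exists set0; rewrite I0 !measure0 !mule0; split => //.

have mT : forall k, measurable (T k).
  by move=> k; apply: measurable_realfun.open_measurable; case: (HT k).
have mI : forall k, measurable (I k).
  by move=> k; apply: measurable_realfun.open_measurable; exact: open_disjoint_itv_open.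
exists (\bigcup_k T k); split.
- by apply: bigcup_open => k _; case: (HT k).
- by move=> x [k _ Tx]; case: (HT k) => _ sT _ _; apply: IO k x (sT x Tx).
- move=> x [Ex Ox]; move: Ox; rewrite {1}(open_disjoint_itv_bigcup oO) => -[k _ Ix].
  by exists k => //; case: (HT k) => _ _ eT _; apply: eT.
- apply: (@le_trans _ _ (k1%:E * \sum_(0 <= k <oo) mu (T k))%E).
    apply: lee_wpmul2l; first by rewrite lee_fin ltW.
    apply: measure_sigma_subadditive => //; exact: bigcupT_measurable.
  have -> : mu O = mu (\bigcup_k I k) by rewrite /I -(open_disjoint_itv_bigcup oO).
  rewrite measure_bigcupT //; last first.
    exact: open_disjoint_itv_trivIset.
  rewrite -nneseriesZl; last by move=> k _; exact: measure_ge0.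
  rewrite -nneseriesZl; last by move=> k _; exact: measure_ge0.
  apply: lee_nneseries; last by move=> k _; case: (HT k).
  by move=> k _ _; rewrite mule_ge0 // lee_fin ltW.
Qed.

Definition outP (f : R -> R) (E : set R) (p : R) (S : R -> R -> set R) :=
  forall c d, c < d -> [/\ open (S c d), S c d `<=` `]c, d[%classic,
      E `&` `]c, d[ `<=` S c d &
      forall c' d', maxitv (S c d) c' d' -> f d' - f c' <= p * (d' - c')].

Definition inP (f : R -> R) (E : set R) (q : R) (S : R -> R -> set R) :=
  forall c d, c < d -> [/\ open (S c d), S c d `<=` `]c, d[%classic,
      E `&` `]c, d[ `<=` S c d &
      forall c' d', maxitv (S c d) c' d' -> q * (d' - c') <= f d' - f c'].

Lemma step_generic (f : R -> R) (E : set R) (p q : R) (So Si : R -> R -> set R) :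
  {homo f : x y / x <= y} -> 0 < p -> 0 < q -> outP f E p So -> inP f E q Si ->
  forall a b O, a <= b -> open O -> O `<=` `]a, b[%classic -> exists U,
     [/\ open U, U `<=` O, E `&` O `<=` U & (q%:E * mu U <= p%:E * mu O)%E].
Proof.
move=> ndf p0 q0 hO hI a b O ab oO Oab.
apply: (@refine E O oO a b q p ab q0 (ltW p0) Oab) => c d [cd _ _ _].
have [oS sS eS cS] := hO c d cd.
have [|U [oU sU eU mU]] := @refine E (So c d) oS c d q p (ltW cd) q0 (ltW p0) sS.
  move=> c' d' mx; have [cd' _ _ _] := mx.
  have [oT sT eT cT] := hI c' d' cd'.
  exists (Si c' d'); split => //.
  apply: le_trans; first exact: (rs_bound oT ndf (ltW cd') q0 sT cT).
  by rewrite lee_fin; apply: cS.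
exists U; split => //.
- by move=> x /sU /sS.
- by move=> x [Ex xcd]; apply: eU; split => //; apply: eS.
- apply: le_trans mU _; rewrite EFinM; apply: lee_wpmul2l; first by rewrite lee_fin ltW.
  rewrite -mu_itvoo //; apply: le_measure; rewrite ?inE //.
  exact: measurable_realfun.open_measurable.
Qed.

End Step.

Section Dini.
Context {R : realType}.
Local Notation mu := (@lebesgue_measure R).
Implicit Types (f : R -> R).

Definition RU f x q := forall e, 0 < e -> exists h, 0 < h < e /\ q * h < f (x + h) - f x.
Definition RL f x p := forall e, 0 < e -> exists h, 0 < h < e /\ f (x + h) - f x < p * h.
Definition LU f x q := forall e, 0 < e -> exists h, 0 < h < e /\ q * h < f x - f (x - h).
Definition LL f x p := forall e, 0 < e -> exists h, 0 < h < e /\ f x - f (x - h) < p * h.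

Lemma EA_null f p q : {homo f : x y / x <= y} -> continuous f -> 0 < p -> p < q ->
  mu.-negligible [set x | LL f x p /\ RU f x q].
Proof.
move=> ndf cf p0 pq; have q0 : 0 < q by apply: lt_trans pq.
apply: (iter_null p0 pq) => a b O ab oO Oab.
apply: (@step_generic _ f _ p q (fun c d => rsL (fun t => f t - p * t) c d)
  (fun c d => rsR (fun t => f t - q * t) c d) ndf p0 q0 _ _ a b O ab oO Oab).
- move=> c d cd; split.
  + exact/open_rsL/cont_lin1.
  + by move=> x [+ _]; rewrite /= in_itv.
  + move=> x [[LLx _] /=]; rewrite in_itv /= => /andP[cx xd].
    have xc0 : 0 < x - c by rewrite subr_gt0.
    have [h [/andP[h0 hx] H]] := LLx _ xc0.
    split; first by rewrite cx xd.
    exists (x - h); split; last by lra.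
    apply/andP; split; lra.
  + move=> c' d' [cd' s nc nd].
    have := rsL_comp (@cont_lin1 _ f p cf) cd' s nc nd; lra.
- move=> c d cd; split.
  + exact/open_rsR/cont_lin1.
  + by move=> x [+ _]; rewrite /= in_itv.
  + move=> x [[_ RUx] /=]; rewrite in_itv /= => /andP[cx xd].
    have dx0 : 0 < d - x by rewrite subr_gt0.
    have [h [/andP[h0 hx] H]] := RUx _ dx0.
    split; first by rewrite cx xd.
    exists (x + h); split; last by lra.
    apply/andP; split; lra.
  + move=> c' d' [cd' s nc nd].
    have := rsR_comp (@cont_lin1 _ f q cf) cd' s nc nd; lra.
Qed.

Lemma EB_null f p q : {homo f : x y / x <= y} -> continuous f -> 0 < p -> p < q ->
  mu.-negligible [set x | RL f x p /\ LU f x q].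
Proof.
move=> ndf cf p0 pq; have q0 : 0 < q by apply: lt_trans pq.
apply: (iter_null p0 pq) => a b O ab oO Oab.
apply: (@step_generic _ f _ p q (fun c d => rsR (fun t => p * t - f t) c d)
  (fun c d => rsL (fun t => q * t - f t) c d) ndf p0 q0 _ _ a b O ab oO Oab).
- move=> c d cd; split.
  + exact/open_rsR/cont_lin2.
  + by move=> x [+ _]; rewrite /= in_itv.
  + move=> x [[RLx _] /=]; rewrite in_itv /= => /andP[cx xd].
    have dx0 : 0 < d - x by rewrite subr_gt0.
    have [h [/andP[h0 hx] H]] := RLx _ dx0.
    split; first by rewrite cx xd.
    exists (x + h); split; last by lra.
    apply/andP; split; lra.
  + move=> c' d' [cd' s nc nd].
    have := rsR_comp (@cont_lin2 _ f p cf) cd' s nc nd; lra.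
- move=> c d cd; split.
  + exact/open_rsL/cont_lin2.
  + by move=> x [+ _]; rewrite /= in_itv.
  + move=> x [[_ LUx] /=]; rewrite in_itv /= => /andP[cx xd].
    have xc0 : 0 < x - c by rewrite subr_gt0.
    have [h [/andP[h0 hx] H]] := LUx _ xc0.
    split; first by rewrite cx xd.
    exists (x - h); split; last by lra.
    apply/andP; split; lra.
  + move=> c' d' [cd' s nc nd].
    have := rsL_comp (@cont_lin2 _ f q cf) cd' s nc nd; lra.
Qed.

Lemma inf_null (E : set R) (C : nat -> R) :
  (forall (n k : nat), exists T, [/\ open T, E `&` `](- n%:R), n%:R[%classic `<=` T &
      ((2 ^+ k)%:E * mu T <= (C n)%:E)%E]) -> mu.-negligible E.
Proof.
move=> H.
apply: (@negligibleS _ _ _ mu (\bigcup_n (E `&` `](- n%:R), n%:R[%classic))).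
  move=> x Ex; exists (Num.Def.archi_bound `|x|) => //; split => //.
  by rewrite /= in_itv /= -ltr_norml; exact: archi_boundP.
apply: negligible_bigcup => n.
have /choice[T HT] := H n.
have mT : forall k, measurable (T k).
  by move=> k; apply: measurable_realfun.open_measurable; case: (HT k).
exists (\bigcap_k T k); split.
- exact: bigcapT_measurable.
- apply/eqP; rewrite eq_le measure_ge0 andbT.
  apply: (@geo_le0 _ _ (2^-1) (C n)).
    by rewrite invr_ge0 ler0n /= invf_lt1 // ltr1n.
  move=> k; case: (HT k) => _ _ mk.
  apply: (@le_trans _ _ (mu (T k))).
    apply: le_measure; rewrite ?inE.
    + exact: bigcapT_measurable.
    + exact: mT.
    + by move=> x /(_ k I).
  have h2 : (0 : R) < 2 ^+ k by rewrite exprn_gt0.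
  have : (mu (T k) <= ((2 ^+ k)^-1)%:E * ((2 ^+ k)%:E * mu (T k)))%E.
    by rewrite muleA -EFinM mulVf ?gt_eqF // mul1e.
  move/le_trans; apply.
  rewrite exprVn EFinM; apply: lee_wpmul2l => //.
- by move=> x Ex k _; case: (HT k) => _ ek _; apply: ek.
Qed.

Lemma EC_null f : {homo f : x y / x <= y} -> continuous f ->
  mu.-negligible [set x | forall M, 0 < M -> RU f x M].
Proof.
move=> ndf cf.
apply: (@inf_null _ (fun n => f n%:R - f (- n%:R))) => n k.
have M0 : (0 : R) < 2 ^+ k by rewrite exprn_gt0.
have n0 : - n%:R <= (n%:R : R) by rewrite (@le_trans _ _ 0) // ?oppr_le0 ?ler0n.
set M : R := 2 ^+ k.
exists (rsR (fun t => f t - M * t) (- n%:R) n%:R); split.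
- exact/open_rsR/cont_lin1.
- move=> x [RUx /=]; rewrite in_itv /= => /andP[cx xd].
  have dx0 : 0 < n%:R - x by rewrite subr_gt0.
  have [h [/andP[h0 hx] H]] := RUx M M0 _ dx0.
  split; first by rewrite cx xd.
  exists (x + h); split; last by lra.
  apply/andP; split; lra.
- have oT := @open_rsR _ (fun t => f t - M * t) (- n%:R) n%:R (@cont_lin1 _ f M cf).
  apply: (rs_bound oT ndf n0 M0).
    by move=> x [+ _]; rewrite /= in_itv.
  move=> c' d' [cd' s nc nd].
  have := rsR_comp (@cont_lin1 _ f M cf) cd' s nc nd; rewrite -/M; lra.
Qed.

Lemma ED_null f : {homo f : x y / x <= y} -> continuous f ->
  mu.-negligible [set x | forall M, 0 < M -> LU f x M].
Proof.
move=> ndf cf.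
apply: (@inf_null _ (fun n => f n%:R - f (- n%:R))) => n k.
have M0 : (0 : R) < 2 ^+ k by rewrite exprn_gt0.
have n0 : - n%:R <= (n%:R : R) by rewrite (@le_trans _ _ 0) // ?oppr_le0 ?ler0n.
set M : R := 2 ^+ k.
exists (rsL (fun t => M * t - f t) (- n%:R) n%:R); split.
- exact/open_rsL/cont_lin2.
- move=> x [LUx /=]; rewrite in_itv /= => /andP[cx xd].
  have xc0 : 0 < x - - n%:R by rewrite subr_gt0.
  have [h [/andP[h0 hx] H]] := LUx M M0 _ xc0.
  split; first by rewrite cx xd.
  exists (x - h); split; last by lra.
  apply/andP; split; lra.
- have oT := @open_rsL _ (fun t => M * t - f t) (- n%:R) n%:R (@cont_lin2 _ f M cf).
  apply: (rs_bound oT ndf n0 M0).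
    by move=> x [+ _]; rewrite /= in_itv.
  move=> c' d' [cd' s nc nd].
  have := rsL_comp (@cont_lin2 _ f M cf) cd' s nc nd; rewrite -/M; lra.
Qed.

End Dini.

Section Classify.
Context {R : realType}.
Variable (f : R -> R) (x : R).
Hypothesis ndf : {homo f : x y / x <= y}.

Definition Qf (h : R) := h^-1 * (f (x + h) - f x).
Definition FU q := forall e, 0 < e -> exists h, [/\ h != 0, `|h| < e & q < Qf h].
Definition FL p := forall e, 0 < e -> exists h, [/\ h != 0, `|h| < e & Qf h < p].

Lemma Qneg h : 0 < h -> Qf (- h) = h^-1 * (f x - f (x - h)).
Proof. by move=> h0; rewrite /Qf invrN mulNr -mulrN opprB. Qed.

Lemma Qge0 h : 0 <= Qf h.
Proof.
have [h0|h0|->] := ltgtP h 0; last by rewrite /Qf invr0 mul0r.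
- rewrite -[h]opprK Qneg ?oppr_gt0 //; apply: mulr_ge0; first by rewrite invr_ge0 oppr_ge0 ltW.
  by rewrite subr_ge0 ndf // lerBlDr lerDl oppr_ge0 ltW.
- rewrite /Qf; apply: mulr_ge0; first by rewrite invr_ge0 ltW.
  by rewrite subr_ge0 ndf // lerDl ltW.
Qed.

Lemma neg_freq (P : R -> Prop) :
  ~ (forall e, 0 < e -> exists h, 0 < h < e /\ P h) ->
  exists e, 0 < e /\ forall h, 0 < h < e -> ~ P h.
Proof.
move=> N; apply: contrapT => N2; apply: N => e e0.
apply: contrapT => N3; apply: N2; exists e; split => // h he Ph.
by apply: N3; exists h.
Qed.

Lemma ev_freq (P : R -> Prop) (e1 : R) : 0 < e1 -> (forall h, 0 < h < e1 -> P h) ->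
  forall e, 0 < e -> exists h, 0 < h < e /\ P h.
Proof.
move=> e10 H e e0.
have m0 : 0 < Num.min e e1 by rewrite lt_min e0 e10.
have hm : Num.min e e1 / 2 < Num.min e e1 by rewrite ltr_pdivrMr // ltr_pMr // ltr1n.
exists (Num.min e e1 / 2); split; last apply: H.
  by rewrite divr_gt0 //= (lt_le_trans hm) // ge_min lexx.
by rewrite divr_gt0 //= (lt_le_trans hm) // ge_min lexx orbT.
Qed.

Lemma split_FU q : FU q -> RU f x q \/ LU f x q.
Proof.
move=> H; have [|nRU] := pselect (RU f x q); [by left | right].
have [e1 [e10 H1]] := neg_freq nRU.
move=> e e0.
have m0 : 0 < Num.min e e1 by rewrite lt_min e0 e10.
have [h [hn0 hm qh]] := H _ m0.
have [hlt|hge] := ltP h 0.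
- have h'0 : 0 < - h by rewrite oppr_gt0.
  have nh : `|h| = - h by rewrite ltr0_norm.
  move: qh; rewrite -[h]opprK Qneg // ltr_pdivlMl // => qh.
  exists (- h); split; last by rewrite mulrC.
  rewrite h'0 /=; rewrite nh in hm; apply: lt_le_trans hm _; by rewrite ge_min lexx.
- have h0 : 0 < h by rewrite lt_neqAle eq_sym hn0 hge.
  exfalso; apply: (H1 h).
    rewrite h0 /=; rewrite ger0_norm in hm => //; apply: lt_le_trans hm _.
    by rewrite ge_min lexx orbT.
  by move: qh; rewrite /Qf ltr_pdivlMl // mulrC.
Qed.

Lemma split_FL p : FL p -> RL f x p \/ LL f x p.
Proof.
move=> H; have [|nRL] := pselect (RL f x p); [by left | right].
have [e1 [e10 H1]] := neg_freq nRL.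
move=> e e0.
have m0 : 0 < Num.min e e1 by rewrite lt_min e0 e10.
have [h [hn0 hm qh]] := H _ m0.
have [hlt|hge] := ltP h 0.
- have h'0 : 0 < - h by rewrite oppr_gt0.
  have nh : `|h| = - h by rewrite ltr0_norm.
  move: qh; rewrite -[h]opprK Qneg // ltr_pdivrMl // => qh.
  exists (- h); split; last by rewrite mulrC.
  rewrite h'0 /=; rewrite nh in hm; apply: lt_le_trans hm _; by rewrite ge_min lexx.
- have h0 : 0 < h by rewrite lt_neqAle eq_sym hn0 hge.
  exfalso; apply: (H1 h).
    rewrite h0 /=; rewrite ger0_norm in hm => //; apply: lt_le_trans hm _.
    by rewrite ge_min lexx orbT.
  by move: qh; rewrite /Qf ltr_pdivrMl // mulrC.
Qed.

Lemma combo (p r1 r2 q : R) : r1 < r2 -> FU q -> FL p ->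
  ((LL f x p /\ RU f x q) \/ (LL f x r2 /\ RU f x q) \/ (LL f x p /\ RU f x r1)) \/
  ((RL f x p /\ LU f x q) \/ (RL f x r2 /\ LU f x q) \/ (RL f x p /\ LU f x r1)).
Proof.
move=> r12 /split_FU [RUq|LUq] /split_FL [RLp|LLp].
- have [LLr2|nLL] := pselect (LL f x r2); first by left; right; left.
  have [e1 [e10 H1]] := neg_freq nLL.
  right; right; right; split => //.
  apply: (ev_freq e10) => h /andP[h0 he].
  have := H1 h; rewrite h0 he => /(_ isT) /negP; rewrite -leNgt => H.
  by apply: lt_le_trans H; rewrite ltr_pM2r.
- by left; left.
- by right; left.
- have [RLr2|nRL] := pselect (RL f x r2); first by right; right; left.
  have [e1 [e10 H1]] := neg_freq nRL.
  left; right; right; split => //.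
  apply: (ev_freq e10) => h /andP[h0 he].
  have := H1 h; rewrite h0 he => /(_ isT) /negP; rewrite -leNgt => H.
  by apply: lt_le_trans H; rewrite ltr_pM2r.
Qed.

Let F h := (Qf h)%:E.

Lemma FU_of q : (q%:E < lime_sup F 0)%E -> FU q.
Proof.
move=> qL e e0; move: qL; rewrite lime_supE => qL.
have : (q%:E < ereal_sup [set F h | h in ball 0%R e `\ 0%R])%E.
  apply: lt_le_trans qL _; apply: ereal_inf_lbound; exists e => //.
  by rewrite /= in_itv /= e0.
move=> /ereal_sup_gt [y [h [bh nh] <-]]; rewrite lte_fin => qh.
exists h; split => //; last by move: bh; rewrite /ball /= sub0r normrN.
by apply/eqP => h0; apply: nh.
Qed.

Lemma FL_of p : (lime_inf F 0 < p%:E)%E -> FL p.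
Proof.
move=> pL e e0; move: pL; rewrite lime_infE => pL.
have : (ereal_inf [set F h | h in ball 0%R e `\ 0%R] < p%:E)%E.
  apply: le_lt_trans pL; apply: ereal_sup_ubound; exists e; first by rewrite /= in_itv /= e0.
  by rewrite /ereal_inf image_comp.
move=> /ereal_inf_lt [y [h [bh nh] <-]]; rewrite lte_fin => qh.
exists h; split => //; last by move: bh; rewrite /ball /= sub0r normrN.
by apply/eqP => h0; apply: nh.
Qed.

Lemma deriv_of_Q (l : R) : Qf @ 0^' --> l -> derivable f x 1.
Proof.
move=> H; apply: (cvgP l).
have -> : (fun h : R => h^-1 *: ((f \o shift x) (h *: 1) - f x)) = Qf.
  by apply/funext => h; rewrite /Qf /= [h%:A]mulr1 [h + x]addrC.
exact: H.
Qed.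

Lemma deriv_of_lim (l : R) : lime_sup F 0 = l%:E -> lime_inf F 0 = l%:E ->
  derivable f x 1.
Proof.
move=> Ls Li; apply: (@deriv_of_Q l).
have hr := lime_sup_inf_at_right Ls Li.
have hl := lime_sup_inf_at_left Ls Li.
move/fine_cvgP: hr => [_ hr]; move/fine_cvgP: hl => [_ hl].
have eqF : fine \o F = Qf by apply/funext.
rewrite eqF in hr hl.
exact: (@cvg_at_right_left_dnbhs R R^o Qf 0 l hr hl).
Qed.

Lemma classify : ~ derivable f x 1 ->
  (exists p q : rat, [/\ 0 < (ratr p : R), (ratr p : R) < ratr q & LL f x (ratr p) /\ RU f x (ratr q)]) \/
  (exists p q : rat, [/\ 0 < (ratr p : R), (ratr p : R) < ratr q & RL f x (ratr p) /\ LU f x (ratr q)]) \/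
  (forall M, 0 < M -> RU f x M) \/ (forall M, 0 < M -> LU f x M).
Proof.
move=> nd.
have Li0 : (0 <= lime_inf F 0)%E by apply: lime_inf_ge0 => h; rewrite lee_fin Qge0.
have LiLs := lime_inf_sup F 0.
case EL: (lime_sup F 0) => [L| |].
- case El: (lime_inf F 0) => [l| |].
  + have l0 : 0 <= l by rewrite -lee_fin -El.
    have lL : l <= L by rewrite -lee_fin -El -EL.
    move: lL; rewrite le_eqVlt => /predU1P[lL|lL].
      by exfalso; apply: nd; apply: (@deriv_of_lim L) => //; rewrite El lL.
    have [p] := rat_in_itvoo lL; rewrite in_itv /= => /andP[lp pL].
    have [r1] := rat_in_itvoo pL; rewrite in_itv /= => /andP[pr1 r1L].
    have [r2] := rat_in_itvoo r1L; rewrite in_itv /= => /andP[r12 r2L].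
    have [q] := rat_in_itvoo r2L; rewrite in_itv /= => /andP[r2q qL].
    have FUq : FU (ratr q) by apply: FU_of; rewrite EL lte_fin.
    have FLp : FL (ratr p) by apply: FL_of; rewrite El lte_fin.
    have p0 : 0 < ratr p :> R by apply: le_lt_trans lp.
    have r20 : 0 < ratr r2 :> R by apply: lt_trans r12; apply: lt_trans pr1.
    have pq : ratr p < ratr q :> R.
      by apply: lt_trans r2q; apply: lt_trans r12.
    have r2q' := r2q.
    case: (combo r12 FUq FLp) => [[H|[H|H]]|[H|[H|H]]].
    * by left; exists p, q.
    * by left; exists r2, q.
    * by left; exists p, r1.
    * by right; left; exists p, q.
    * by right; left; exists r2, q.
    * by right; left; exists p, r1.
  + by move: LiLs; rewrite El EL.
  + by move: Li0; rewrite El.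
- right; right.
  have FUM : forall M, FU M by move=> M; apply: FU_of; rewrite EL ltry.
  have [C|nC] := pselect (forall M, 0 < M -> RU f x M); first by left.
  right.
  have [M0 [M00 nR]] : exists M0, 0 < M0 /\ ~ RU f x M0.
    apply: contrapT => N; apply: nC => M M0; apply: contrapT => N2; apply: N.
    by exists M.
  have [e1 [e10 H1]] := neg_freq nR.
  move=> M Mpos e e0.
  have m0 : 0 < Num.min e e1 by rewrite lt_min e0 e10.
  have [h [hn0 hm qh]] := FUM (Num.max M M0) _ m0.
  have [hlt|hge] := ltP h 0.
  + have h'0 : 0 < - h by rewrite oppr_gt0.
    have nh : `|h| = - h by rewrite ltr0_norm.
    have qM : M < Qf h by apply: le_lt_trans qh; rewrite le_max lexx.
    move: qM; rewrite -[h]opprK Qneg // ltr_pdivlMl // => qh'.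
    exists (- h); split; last by rewrite mulrC.
    rewrite h'0 /=; rewrite nh in hm; apply: lt_le_trans hm _; by rewrite ge_min lexx.
  + have h0 : 0 < h by rewrite lt_neqAle eq_sym hn0 hge.
    exfalso; apply: (H1 h).
      rewrite h0 /=; rewrite ger0_norm in hm => //; apply: lt_le_trans hm _.
      by rewrite ge_min lexx orbT.
    have qM : M0 < Qf h by apply: le_lt_trans qh; rewrite le_max lexx orbT.
    by move: qM; rewrite /Qf ltr_pdivlMl // mulrC.
- by move: LiLs; rewrite EL leeNy_eq => /eqP El; move: Li0; rewrite El.
Qed.

End Classify.

Section Leb.
Context {R : realType}.
Local Notation mu := (@lebesgue_measure R).

Definition Aset (f : R -> R) (n : nat) : set R :=
  match (unpickle n : option (rat * rat)) with
  | Some (p, q) => if (0 < (ratr p : R)) && ((ratr p : R) < ratr q) then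
      [set x | LL f x (ratr p) /\ RU f x (ratr q)] else set0
  | None => set0 end.

Definition Bset (f : R -> R) (n : nat) : set R :=
  match (unpickle n : option (rat * rat)) with
  | Some (p, q) => if (0 < (ratr p : R)) && ((ratr p : R) < ratr q) then
      [set x | RL f x (ratr p) /\ LU f x (ratr q)] else set0
  | None => set0 end.

Lemma lebesgue_mono (f : R -> R) : {homo f : x y / x <= y} -> continuous f ->
  mu.-negligible [set x | ~ derivable f x 1].
Proof.
move=> ndf cf.
apply: (@negligibleS _ _ _ mu ((\bigcup_n Aset f n) `|` (\bigcup_n Bset f n) `|`
  ([set x | forall M, 0 < M -> RU f x M] `|` [set x | forall M, 0 < M -> LU f x M]))).
  move=> x /= nd; case: (classify ndf nd) => [[p [q [p0 pq H]]]|[[p [q [p0 pq H]]]|[H|H]]].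
  - left; left; exists (pickle (p, q)); first by [].
    by rewrite /Aset pickleK p0 pq; exact: H.
  - left; right; exists (pickle (p, q)); first by [].
    by rewrite /Bset pickleK p0 pq; exact: H.
  - by right; left.
  - by right; right.
apply: negligibleU; first apply: negligibleU.
- apply: negligible_bigcup => n; rewrite /Aset.
  case: (unpickle n) => [[p q]|]; last exact: negligible_set0.
  case: ifPn => [/andP[p0 pq]|_]; last exact: negligible_set0.
  exact: EA_null.
- apply: negligible_bigcup => n; rewrite /Bset.
  case: (unpickle n) => [[p q]|]; last exact: negligible_set0.
  case: ifPn => [/andP[p0 pq]|_]; last exact: negligible_set0.
  exact: EB_null.
- by apply: negligibleU; [exact: EC_null | exact: ED_null].
Qed.

End Leb.

Section Local.
Context {R : realType}.
Local Notation mu := (@lebesgue_measure R).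

Definition clamp (r s t : R) := Num.min (Num.max t r) s.

Lemma clamp_in r s t : r <= s -> r <= clamp r s t <= s.
Proof.
move=> rs; rewrite /clamp ge_min le_min le_max lexx rs /= orbT andbT.
by rewrite lexx orbT.
Qed.

Lemma clamp_id r s t : r <= t <= s -> clamp r s t = t.
Proof.
by move=> /andP[rt ts]; rewrite /clamp (max_idPl rt) (min_idPl ts).
Qed.

Lemma clamp_homo r s : {homo clamp r s : x y / x <= y}.
Proof.
by move=> x y xy; rewrite /clamp le_min2 // le_max2.
Qed.

Lemma clamp_cont r s : continuous (clamp r s).
Proof.
have -> : clamp r s = ((fun t => t) \max (fun=> r)) \min (fun=> s) by [].
apply: min_fun_continuous; last exact: cst_continuous.
apply: max_fun_continuous; last exact: cst_continuous.
by move=> x; exact: cvg_id.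
Qed.

Lemma local_leb (phi : R -> R) (r s : R) : r < s ->
  (forall x, r <= x <= s -> {for x, continuous phi}) ->
  ((forall u v, r <= u -> u <= v -> v <= s -> phi u <= phi v) \/
   (forall u v, r <= u -> u <= v -> v <= s -> phi v <= phi u)) ->
  mu.-negligible [set x | r < x < s /\ ~ derivable phi x 1].
Proof.
move=> rs cphi mono.
pose F := phi \o clamp r s.
have cF : continuous F.
  move=> x; apply: continuous_comp; first exact: clamp_cont.
  by apply: cphi; apply: clamp_in; exact: ltW.
have near_eq : forall x, r < x < s -> \forall y \near x, F y = phi y.
  move=> x xrs; have : nbhs x `]r, s[%classic.
    by apply: open_nbhs_nbhs; split; [exact: itv_open | rewrite /= in_itv].
  apply: filterS => y; rewrite /= in_itv => /andP[ry ys].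
  by rewrite /F /= clamp_id // !ltW.
have cl := fun t => clamp_in t (ltW rs).
case: mono => [inc|dec].
- have ndF : {homo F : x y / x <= y}.
    move=> u v uv; rewrite /F /=.
    have /andP[h1 h2] := cl u; have /andP[h3 h4] := cl v.
    by apply: inc => //; exact: clamp_homo.
  apply: negligibleS (lebesgue_mono ndF cF) => x [xrs nd] dF; apply: nd.
  by apply: near_eq_derivable (near_eq x xrs) dF.
- pose G := fun t => - F t.
  have ndG : {homo G : x y / x <= y}.
    move=> u v uv; rewrite /G /F /= lerN2.
    have /andP[h1 h2] := cl u; have /andP[h3 h4] := cl v.
    by apply: dec => //; exact: clamp_homo.
  have cG : continuous G by move=> x; apply: continuousN; exact: cF.
  apply: negligibleS (lebesgue_mono ndG cG) => x [xrs nd] dG; apply: nd.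
  have dG' := derivableN dG.
  apply: near_eq_derivable dG'.
  by apply: filterS (near_eq x xrs) => y <-; rewrite /G /= opprK.
Qed.

End Local.

Section MainSec.
Context {R : realType}.
Local Notation mu := (@lebesgue_measure R).
Variables (a b : R) (phi : R -> R).
Hypothesis cphi : forall x, a < x < b -> {for x, continuous phi}.

Let Zs := [set y | visc_subdiff a b phi y 0].
Let U := `]a, b[%classic `&` ~` closure Zs.

Lemma oU : open U.
Proof. apply: openI; first exact: itv_open. exact/closed_openC/closed_closure. Qed.

Lemma locmin_visc (V : set R) m : open V -> V m -> V `<=` `]a, b[%classic ->
  (forall z, V z -> phi m <= phi z) -> visc_subdiff a b phi m 0.
Proof.
move=> oV Vm Vab Hm; split; first exact: Vab.
exists V, (fun=> phi m); split; split => //.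
- split => z Vz; first exact: derivable_cst.
  have -> : derive1 (fun=> phi m) = (fun=> 0 : R).
    by apply/funext => t; exact: derive1_cst.
  exact: cst_continuous.
- exact: derive1_cst.
Qed.

Lemma qc y z w : y < z -> z < w -> `[y, w]%classic `<=` U ->
  ~ (phi z < phi y /\ phi z < phi w).
Proof.
move=> yz zw sU [zy zw'].
have yw : y <= w by apply: ltW; apply: lt_trans zw.
have cw : {within `[y, w], continuous phi}.
  apply: continuous_in_subspaceT => t; rewrite inE => /sU [+ _].
  by rewrite /= in_itv /= => /cphi.
have [m mI mmin] := EVT_min yw cw.
have hz : phi m <= phi z by apply: mmin; rewrite in_itv /= !ltW.
move: (mI); rewrite in_itv /= => /andP[ym mw].
have ym' : y < m.
  rewrite lt_neqAle ym andbT; apply/eqP => E; subst m.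
  by move: (le_lt_trans hz zy); rewrite ltxx.
have mw' : m < w.
  rewrite lt_neqAle mw andbT; apply/eqP => E; subst m.
  by move: (le_lt_trans hz zw'); rewrite ltxx.
have Um : U m by apply: sU; rewrite /= in_itv /= ym mw.
case: Um => _; apply; apply: subset_closure.
apply: (@locmin_visc `]y, w[%classic).
- exact: itv_open.
- by rewrite /= in_itv /= ym' mw'.
- move=> t; rewrite /= in_itv /= => /andP[yt tw].
  by have [] := sU t; rewrite /= in_itv /= ?(ltW yt) ?(ltW tw).
- move=> t; rewrite /= in_itv /= => /andP[yt tw].
  by apply: mmin; rewrite in_itv /= !ltW.
Qed.

Definition inc_on (r s : R) := forall u v, r <= u -> u <= v -> v <= s -> phi u <= phi v.
Definition dec_on (r s : R) := forall u v, r <= u -> u <= v -> v <= s -> phi v <= phi u.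

Definition Good (r s : rat) := [/\ (ratr r : R) < ratr s, `[(ratr r : R), ratr s]%classic `<=` U &
  inc_on (ratr r) (ratr s) \/ dec_on (ratr r) (ratr s)].
Definition Mon (x : R) := exists r s, Good r s /\ (ratr r : R) < x < ratr s.

Lemma ball_sub (x d t : R) : (forall t, `|x - t| < d -> U t) -> x - d < t < x + d -> U t.
Proof. by move=> H ht; apply: H; rewrite ltr_distlC. Qed.

Lemma no_two x1 x2 : x1 < x2 -> U x1 -> U x2 -> ~ Mon x1 -> ~ Mon x2 ->
  `[x1, x2]%classic `<=` U -> False.
Proof.
move=> x12 U1 U2 nM1 nM2 sU.
have /nbhs_ballP[d1 /= d10 B1] : nbhs x1 U by apply: open_nbhs_nbhs; split => //; exact: oU.
have /nbhs_ballP[d2 /= d20 B2] : nbhs x2 U by apply: open_nbhs_nbhs; split => //; exact: oU.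
set d := Num.min (Num.min d1 d2) ((x2 - x1) / 2).
have d0 : 0 < d by rewrite !lt_min d10 d20 divr_gt0 // subr_gt0.
have dd1 : d <= d1 by rewrite /d !ge_min lexx.
have dd2 : d <= d2 by rewrite /d !ge_min lexx orbT.
have dx : d <= (x2 - x1) / 2 by rewrite /d ge_min lexx orbT.
have dx' : 2 * d <= x2 - x1 by move: dx; rewrite ler_pdivlMr // mulrC.
have B1' : forall t, x1 - d < t < x1 + d -> U t.
  move=> t /andP[h1 h2]; apply: B1; rewrite /ball /= ltr_distlC; apply/andP; split; lra.
have B2' : forall t, x2 - d < t < x2 + d -> U t.
  move=> t /andP[h1 h2]; apply: B2; rewrite /ball /= ltr_distlC; apply/andP; split; lra.
have [r1] := @rat_in_itvoo R (x1 - d) x1 ltac:(lra); rewrite in_itv /= => /andP[r1a r1b].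
have [s1] := @rat_in_itvoo R x1 (x1 + d) ltac:(lra); rewrite in_itv /= => /andP[s1a s1b].
have [r2] := @rat_in_itvoo R (x2 - d) x2 ltac:(lra); rewrite in_itv /= => /andP[r2a r2b].
have [s2] := @rat_in_itvoo R x2 (x2 + d) ltac:(lra); rewrite in_itv /= => /andP[s2a s2b].
have ninc : ~ inc_on (ratr r1) (ratr s1).
  move=> inc; apply: nM1; exists r1, s1; split; last by rewrite r1b s1a.
  split; [lra| |by left].
  by move=> t; rewrite /= in_itv /= => /andP[h1 h2]; apply: B1'; apply/andP; split; lra.
have ndec : ~ dec_on (ratr r2) (ratr s2).
  move=> dec; apply: nM2; exists r2, s2; split; last by rewrite r2b s2a.
  split; [lra| |by right].
  by move=> t; rewrite /= in_itv /= => /andP[h1 h2]; apply: B2'; apply/andP; split; lra.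
have [u [v [ru uv vs vu]]] : exists u v, [/\ ratr r1 <= u, u <= v, v <= ratr s1 & phi v < phi u].
  apply: contrapT => N; apply: ninc => u v ru uv vs; rewrite leNgt; apply/negP => vu.
  by apply: N; exists u, v.
have [u' [v' [ru' uv' vs' vu']]] : exists u v, [/\ ratr r2 <= u, u <= v, v <= ratr s2 & phi u < phi v].
  apply: contrapT => N; apply: ndec => p1 p2 h1 h2 h3; rewrite leNgt; apply/negP => h4.
  by apply: N; exists p1, p2.
have ltuv : u < v by rewrite lt_neqAle uv andbT; apply/eqP => E; move: vu; rewrite E ltxx.
have ltuv' : u' < v' by rewrite lt_neqAle uv' andbT; apply/eqP => E; move: vu'; rewrite E ltxx.
have vu1 : v < u' by lra.
have sUw : `[u, v']%classic `<=` U.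
  move=> t; rewrite /= in_itv /= => /andP[h1 h2].
  have [tx1|tx1] := leP t x1; first by apply: B1'; apply/andP; split; lra.
  have [tx2|tx2] := leP t x2; first by apply: sU; rewrite /= in_itv /= ltW // tx2.
  by apply: B2'; apply/andP; split; lra.
have h1 := qc ltuv (lt_trans vu1 ltuv') sUw.
have sUw' : `[v, v']%classic `<=` U.
  by move=> t; rewrite /= in_itv /= => /andP[h3 h4]; apply: sUw; rewrite /= in_itv /= h4 andbT; lra.
have h2 := qc vu1 ltuv' sUw'.
have v'v : phi v' <= phi v by rewrite leNgt; apply/negP => H; apply: h1; split.
by apply: h2; split => //; apply: lt_le_trans vu' v'v.
Qed.

Lemma ND_null : mu.-negligible [set x | U x /\ ~ derivable phi x 1].
Proof.
pose Gs n : set R := match (unpickle n : option (rat * rat)) with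
  | Some (r, s) => [set x | Good r s /\ (ratr r < x < ratr s) /\ ~ derivable phi x 1]
  | None => set0 end.
pose Ns := [set x | U x /\ ~ Mon x].
apply: (@negligibleS _ _ _ mu (\bigcup_n Gs n `|` Ns)).
  move=> x [Ux nd]; have [[r [s [G xrs]]]|nM] := pselect (Mon x); last first.
    by right; split.
  left; exists (pickle (r, s)); first by [].
  rewrite /Gs pickleK; split; first exact: G.
  by split; [exact: xrs | exact: nd].
apply: negligibleU.
- apply: negligible_bigcup => n; rewrite /Gs; case: unpickle => [[r s]|]; last first.
    exact: negligible_set0.
  have [G|nG] := pselect (Good r s); last first.
    by apply: (negligibleS _ (negligible_set0 mu)) => x [].
  case: (G) => rs sU mono.
  apply: (negligibleS _ (local_leb rs _ mono)); first by move=> x [_ [xrs nd]]; split.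
  by move=> t /sU [+ _]; rewrite /= in_itv /= => /cphi.
- have cNs : countable Ns.
    apply/countable_injP.
    have /choice[idx Hidx] : forall x, exists k, U x -> open_disjoint_itv oU k x.
      move=> x; have [Ux|nUx] := pselect (U x); last by exists 0%N.
      have := Ux; rewrite {1}(open_disjoint_itv_bigcup oU) => -[k _ Ik]; by exists k.
    exists idx => x1 x2; rewrite !inE => -[U1 nM1] [U2 nM2] E.
    have I1 := Hidx x1 U1; have I2 := Hidx x2 U2; rewrite E in I1.
    have iI := @open_disjoint_itv_is_interval R U oU (idx x2).
    have IU : open_disjoint_itv oU (idx x2) `<=` U.
      by move=> y Iy; rewrite (open_disjoint_itv_bigcup oU); exists (idx x2).
    have sub : forall y z, open_disjoint_itv oU (idx x2) y ->
        open_disjoint_itv oU (idx x2) z -> `[y, z]%classic `<=` U.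
      move=> y z Iy Iz t; rewrite /= in_itv /= => yzt; apply: IU; exact: (iI y z).
    case: (ltgtP x1 x2) => // h; exfalso.
    + exact: (no_two h U1 U2 nM1 nM2 (sub _ _ I1 I2)).
    + exact: (no_two h U2 U1 nM2 nM1 (sub _ _ I2 I1)).
  exists Ns; split => //.
  + by apply: countable_measurable => // t; exact: measurable_set1.
  + exact: countable_lebesgue_measure0.
Qed.

End MainSec.

Unset Implicit Arguments. Set Strict Implicit. Set Printing Implicit Defensive.

Theorem proposition2p8 (R : realType) (a b : R) (phi : R -> R) :
  a < b ->
  {within `]a, b[, continuous phi} ->
  {ae (@lebesgue_measure R), forall x, `]a, b[%classic x ->
     derivable phi x 1 \/
     ((exists xs : nat -> R,
         xs @ \oo --> x /\ (forall k, visc_subdiff a b phi (xs k) 0)) /\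
      lim_subdiff a b phi x 0)}.
Proof.
move=> ab hc.
have cphi : forall x, a < x < b -> {for x, continuous phi}.
  move: hc; rewrite continuous_open_subspace; last exact: itv_open.
  by move=> h x xab; apply: h; rewrite inE /= in_itv.
apply: (negligibleS _ (ND_null cphi)) => x /= nP.
have xab : `]a, b[%classic x.
  by apply: contrapT => nx; apply: nP => /nx.
have nd : ~ derivable phi x 1 by move=> d; apply: nP => _; left.
split => //; split => // cl.
apply: nP => _; right.
have /choice[xs Hxs] : forall n : nat, exists z,
    visc_subdiff a b phi z 0 /\ `|x - z| < n.+1%:R^-1.
  move=> n; have e0 : (0 : R) < n.+1%:R^-1 by rewrite invr_gt0.
  have [z [Zz bz]] := cl _ (nbhsx_ballx (x : R) _ e0).
  by exists z; split.
have cxs : xs @ \oo --> x.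
  apply/cvgrPdist_lt => e e0.
  apply: filterS (near_infty_natSinv_lt (PosNum e0)) => n hn.
  by apply: lt_trans hn; exact: (Hxs n).2.
split; first by exists xs; split => // k; exact: (Hxs k).1.
exists xs, (fun=> 0); split => //; first exact: cvg_cst.
by move=> k; exact: (Hxs k).1.
Qed.
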